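(* Let $B_n(t)=\sum_{k=0}^{n}\binom{n}{k}^2t^k$ for $n\ge0$ and $B_n(t)=0$ for $n<0$, and let $D_m(B(t);n)=\det(B_{i+j+m}(t))_{i,j=0}^{n-1}$. Then for every integer $m\ge1$: $D_{-m}(B(t);n)=0$ for $1\le n\le m$, and for $n\ge m+1$ $$D_{-m}(B(t);n)=(-1)^{\binom{m+1}{2}}\,(2t)^{\,n-m-1}\,p_{m+1}(t,n-m-1)$$ as an identity of polynomials in $t$.
   Context: The Narayana polynomials are $C_0(t)=1$ and $C_n(t)=\sum_{k=0}^{n-1}\binom{n-1}{k}\binom{n}{k}\frac{1}{k+1}t^k$ for $n\ge1$, extended by $C_n(t)=0$ for $n<0$. For integers $m,n\ge0$, $p_m(t,n)=\det(C_{i+j+m}(t))_{i,j=0}^{n-1}$ (the $0\times0$ determinant being $1$). It is known that $\sum_{n\ge0}B_n(t)x^n=\frac{1}{\sqrt{(1-(1+t)x)^2-4tx^2}}$. *)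

(* Defs.v *)
From HB Require Import structures.
From mathcomp Require Import all_boot all_order all_algebra.
Set Implicit Arguments. Unset Strict Implicit. Unset Printing Implicit Defensive.
Import Order.TTheory GRing.Theory Num.Theory.
Local Open Scope ring_scope.

Definition Bnat (n : nat) : {poly rat} :=
  \sum_(k < n.+1) (('C(n, k) ^ 2)%N)%:R *: 'X^k.

Definition B (n : int) : {poly rat} :=
  match n with Posz k => Bnat k | Negz _ => 0 end.

Definition DB (m : int) (n : nat) : {poly rat} :=
  \det (\matrix_(i < n, j < n) B ((i : nat)%:Z + (j : nat)%:Z + m)).

Definition Nara (n : nat) : {poly rat} :=
  if n is 0 then 1
  else \sum_(k < n) ((('C(n.-1, k) * 'C(n, k))%N)%:R / (k.+1)%:R) *: 'X^k.

Definition pN (m n : nat) : {poly rat} :=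
  \det (\matrix_(i < n, j < n) Nara (i + j + m)).

(* Main.v *)
Require Import Defs.
From HB Require Import structures.
From mathcomp Require Import all_boot all_order all_algebra.
From mathcomp Require Import ring lra zify.
Import Order.TTheory GRing.Theory Num.Theory.
Local Open Scope ring_scope.


Lemma coef_sumX n (F : nat -> rat) r :
  (\sum_(k < n) F k *: 'X^k)`_r = if (r < n)%N then F r else 0.
Proof.
elim: n => [|n IH]; first by rewrite big_ord0 coef0.
rewrite big_ord_recr /= coefD IH coefZ coefXn /=.
have [h|h|->] := ltngtP r n.
- by rewrite mulr0 addr0 ltnS ltnW.
- by rewrite mulr0 addr0 ltnNge h.
- by rewrite mulr1 add0r ltnSn.
Qed.

Lemma coef_Bnat n r : (Bnat n)`_r = (('C(n, r) ^ 2)%N)%:R.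
Proof.
rewrite /Bnat (coef_sumX n.+1 (fun k => (('C(n,k)^2)%N)%:R)) ltnS; case: leqP => // h.
by rewrite bin_small.
Qed.

Lemma coef_Nara p r :
  (Nara p.+1)`_r = (('C(p, r) * 'C(p.+1, r))%N)%:R / (r.+1)%:R.
Proof.
rewrite /Nara /= (coef_sumX p.+1 (fun k => (('C(p, k) * 'C(p.+1, k))%N)%:R / (k.+1)%:R)) ltnS; case: leqP => // h.
by rewrite bin_small // mul0n mul0r.
Qed.

Lemma binL (M r : nat) :
  ('C(M, r))%:R = ('C(M.+1, r))%:R * ((M.+1)%:R - r%:R) / (M.+1)%:R :> rat.
Proof.
have h := mul_bin_down M.+1 r; rewrite /= in h.
case: (leqP r M.+1) => hr.
  apply: (mulIf (x := (M.+1)%:R)); first by rewrite pnatr_eq0.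
  rewrite divfK ?pnatr_eq0 // -natrB // -!natrM; congr (_%:R); rewrite mulnC h; apply: mulnC.
by rewrite !bin_small ?mul0r // ltnW.
Qed.

Lemma binD (M r : nat) :
  ('C(M, r))%:R = ('C(M.+1, r.+1))%:R * (r.+1)%:R / (M.+1)%:R :> rat.
Proof.
have h := mul_bin_diag M.+1 r; rewrite /= in h.
apply: (mulIf (x := (M.+1)%:R)); first by rewrite pnatr_eq0.
rewrite divfK ?pnatr_eq0 // -!natrM; congr (_%:R); rewrite mulnC h; apply: mulnC.
Qed.



Lemma recA n : (n.+2)%:R * Bnat n.+2 - (2*n+3)%:R * (1+'X) * Bnat n.+1
   + (n.+1)%:R * (1-'X)^+2 * Bnat n = 0.
Proof.
apply/polyP => r; rewrite coef0.
have -> : (n.+2)%:R * Bnat n.+2 - (2*n+3)%:R * (1+'X) * Bnat n.+1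
   + (n.+1)%:R * (1-'X)^+2 * Bnat n =
   Bnat n.+2 *+ n.+2 - (Bnat n.+1 + 'X * Bnat n.+1) *+ (2*n+3)
   + (Bnat n - 'X * Bnat n *+ 2 + 'X * ('X * Bnat n)) *+ n.+1 by ring.
rewrite !(coefD, coefN, coefMn, coefXM) !coef_Bnat.
case: r => [|[|s]] /=.
- rewrite !bin0; ring.
- rewrite !bin0 !bin1; ring.
rewrite !natrX (binL n (s.+2)) (binL n (s.+1)) (binD n s).
rewrite (binL (n.+1) (s.+2)) (binD (n.+1) (s.+1)).
field.
have hn := ler0n rat n; repeat (apply/andP; split); apply: lt0r_neq0; lra.
Qed.

Lemma recN q : (q.+4)%:R * Nara q.+3 - (2*q+5)%:R * (1+'X) * Nara q.+2
   + (q.+1)%:R * (1-'X)^+2 * Nara q.+1 = 0.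
Proof.
apply/polyP => r; rewrite coef0.
have -> : (q.+4)%:R * Nara q.+3 - (2*q+5)%:R * (1+'X) * Nara q.+2
   + (q.+1)%:R * (1-'X)^+2 * Nara q.+1 =
   Nara q.+3 *+ q.+4 - (Nara q.+2 + 'X * Nara q.+2) *+ (2*q+5)
   + (Nara q.+1 - 'X * Nara q.+1 *+ 2 + 'X * ('X * Nara q.+1)) *+ q.+1 by ring.
rewrite !(coefD, coefN, coefMn, coefXM) !coef_Nara.
have hq := ler0n rat q.
case: r => [|[|s]] /=.
- by rewrite !bin0; field.
- by rewrite !bin0 !bin1; field.
have hs := ler0n rat s.
rewrite !natrM (binL q (s.+2)) (binD q (s.+1)) (binD q s).
rewrite (binL (q.+1) (s.+2)) (binD (q.+1) (s.+1)) (binD (q.+1) s).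
rewrite (binD (q.+2) (s.+1)) (binL (q.+2) (s.+2)).
field.
repeat (apply/andP; split); apply: lt0r_neq0; lra.
Qed.



Definition g (p : nat) : {poly rat} :=
  match p with 0 => 1 | 1 => -(1 + 'X) | q.+2 => -(2%:P * 'X) * Nara q.+1 end.

Lemma eq0_by (R : comNzRingType) (x y c : R) : x = c * y -> y = 0 -> x = 0.
Proof. by move=> -> ->; rewrite mulr0. Qed.

Lemma eq0_by' (R : comNzRingType) (y c x : R) : y = 0 -> x = c * y -> x = 0.
Proof. by move=> -> ->; rewrite mulr0. Qed.

Lemma Nara1 : Nara 1 = 1.
Proof.
apply/polyP => r; rewrite coef_Nara coef1; case: r => [|r].
  by rewrite !bin0 divr1.
by rewrite bin0n mul0n mul0r.
Qed.

Lemma Nara2 : Nara 2 = 1 + 'X.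
Proof.
apply/polyP => r; rewrite coef_Nara coefD coef1 coefX.
case: r => [|[|r]].
- by rewrite !bin0 divr1 addr0.
- by rewrite bin1 bin1 add0r /= divff.
- by rewrite (@bin_small 1) // mul0n mul0r addr0.
Qed.

Lemma Bnat0 : Bnat 0 = 1.
Proof. by apply/polyP => r; rewrite coef_Bnat coef1; case: r => [|r] //; rewrite bin_small. Qed.

Lemma Bnat1 : Bnat 1 = 1 + 'X.
Proof.
apply/polyP => r; rewrite coef_Bnat coefD coef1 coefX.
by case: r => [|[|r]] //=; rewrite ?bin_small // addr0.
Qed.

Definition c1 : {poly rat} := 1 + 'X.
Definition c2 : {poly rat} := (1 - 'X)^+2.
Definition Dl : {poly {poly rat}} := 1 - (2 * c1)%:P * 'X + c2%:P * 'X^2.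
Definition Dp : {poly {poly rat}} := - (2 * c1)%:P + (2 * c2)%:P * 'X.

Lemma coefDl (Z : {poly {poly rat}}) n : (Dl * Z)`_n = Z`_n - 2 * c1 * (if n is m.+1 then Z`_m else 0)
   + c2 * (if n is m.+2 then Z`_m else 0).
Proof.
rewrite /Dl !mulrDl mulNr mul1r -!mulrA !coefD coefN !coefCM !coefXM.
case: n => [|[|m]] /=; rewrite /c1 /c2; ring.
Qed.

Lemma coefDp (Z : {poly {poly rat}}) n : (Dp * Z)`_n = - (2 * c1) * Z`_n + 2 * c2 * (if n is m.+1 then Z`_m else 0).
Proof.
rewrite /Dp !mulrDl mulNr -!mulrA !coefD coefN !coefCM coefXM.
case: n => [|m] /=; rewrite /c1 /c2; ring.
Qed.

Definition Ap (K : nat) : {poly {poly rat}} := \poly_(i < K) Bnat i.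
Definition Gp (K : nat) : {poly {poly rat}} := \poly_(i < K) g i.

Lemma PA K n : (n.+1 < K)%N -> ((Dl * (Ap K)^`()) *+ 2 + Dp * Ap K)`_n = 0.
Proof.
move=> H; rewrite coefD coefMn coefDl coefDp /c1 /c2.
case: n H => [|[|m]] H; rewrite !coef_deriv !coef_poly.
- rewrite ?H ?(ltnW H) Bnat0 Bnat1; ring.
- rewrite ?H ?(ltnW H) ?(ltnW (ltnW H)).
  apply: (@eq0_by' _ _ 2 _ (recA 0)); rewrite ?Bnat0 ?Bnat1; ring.
- rewrite ?H ?(ltnW H) ?(ltnW (ltnW H)) ?(ltnW (ltnW (ltnW H))).
  apply: (@eq0_by' _ _ 2 _ (recA m.+1)); ring.
Qed.

Lemma g0 : g 0 = 1. Proof. by []. Qed.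
Lemma g1 : g 1 = -(1 + 'X). Proof. by []. Qed.
Lemma g2 : g 2 = -(2%:P * 'X). Proof. by rewrite /g Nara1 mulr1. Qed.
Lemma g3 : g 3 = -(2%:P * 'X) * (1 + 'X). Proof. by rewrite /g Nara2. Qed.
Lemma gSS q : g q.+2 = -(2%:P * 'X) * Nara q.+1. Proof. by []. Qed.

Lemma PG K n : (n.+1 < K)%N -> ((Dl * (Gp K)^`()) *+ 2 - Dp * Gp K)`_n = 0.
Proof.
move=> H; rewrite coefD coefN coefMn coefDl coefDp /c1 /c2.
case: n H => [|[|[|m]]] H; rewrite !coef_deriv !coef_poly.
- rewrite ?H ?(ltnW H) g0 g1; ring.
- rewrite ?H ?(ltnW H) ?(ltnW (ltnW H)) g0 g1 g2; ring.
- rewrite ?H ?(ltnW H) ?(ltnW (ltnW H)) ?(ltnW (ltnW (ltnW H))) g1 g2 g3; ring.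
- rewrite ?H ?(ltnW H) ?(ltnW (ltnW H)) ?(ltnW (ltnW (ltnW H))) !gSS.
  apply: (@eq0_by' _ _ (2 * -(2%:P * 'X)) _ (recN m)); ring.
Qed.

Lemma polyn_eq0 (x : {poly rat}) k : x *+ k.+1 = 0 -> x = 0.
Proof.
move=> h; apply/polyP => i; have := congr1 (fun p : {poly rat} => p`_i) h.
by rewrite /= coefMn coef0 => /eqP; rewrite mulrn_eq0 /= => /eqP.
Qed.

Lemma conv p : \sum_(j < p.+1) g j * Bnat (p - j) = (p == 0)%:R.
Proof.
case: p => [|q]; first by rewrite big_ord1 g0 Bnat0 mulr1.
pose K := q.+3; pose A := Ap K; pose G := Gp K; pose W := G * A.
have hQ : forall n, (n.+1 < K)%N -> (Dl * W^`())`_n = 0.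
  move=> n hn; apply: (@polyn_eq0 _ 1); rewrite -coefMn.
  have -> : (Dl * W^`()) *+ 2 = A * ((Dl * G^`()) *+ 2 - Dp * G)
     + G * ((Dl * A^`()) *+ 2 + Dp * A) by rewrite /W derivM; ring.
  rewrite coefD !coefM !big1 ?addr0 // => i _.
  - by rewrite PA ?mulr0 // (leq_ltn_trans _ hn) // ltnS leq_subr.
  - by rewrite PG ?mulr0 // (leq_ltn_trans _ hn) // ltnS leq_subr.
have hW' : forall n, (n.+1 < K)%N -> W^`()`_n = 0.
  elim/ltn_ind => n IH hn; have := hQ n hn; rewrite coefDl.
  case: n IH hn => [|[|m]] IH hn.
  - by rewrite !mulr0 subr0 addr0.
  - by rewrite (IH 0 _ (ltnW hn)) // !mulr0 subr0 addr0.
  - by rewrite (IH m.+1 _ (ltnW hn)) // (IH m _ (ltnW (ltnW hn))) // !mulr0 subr0 addr0.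
have hW : W`_q.+1 = 0.
  by apply: (@polyn_eq0 _ q); rewrite -coef_deriv hW'.
rewrite -[RHS]hW /W coefM; apply: eq_bigr => j _.
rewrite !coef_poly ifT ?ifT //.
  by rewrite /K ltnS (leq_trans (leq_subr _ _)).
by rewrite /K (leq_trans (ltn_ord j)).
Qed.



Lemma Bint (i j m : nat) :
  B (i%:Z + j%:Z + - m%:Z) = if (m <= i + j)%N then Bnat (i + j - m) else 0.
Proof.
case: leqP => h.
  by rewrite -PoszD subzn.
have -> : i%:Z + j%:Z + - m%:Z = Negz (m - (i + j)).-1.
  rewrite NegzE prednK ?subn_gt0 // -PoszD -opprB subzn //; exact: ltnW.
by [].
Qed.

Lemma conv' p : \sum_(0 <= l < p.+1) g (p - l) * Bnat l = (p == 0)%:R.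
Proof.
rewrite big_nat_rev /= big_mkord -(conv p); apply: eq_bigr => l _.
by rewrite add0n subSS subKn // -ltnS.
Qed.

Lemma big_shift (F : nat -> {poly rat}) a b :
  \sum_(a <= l < b) F l = \sum_(0 <= l < b - a) F (l + a)%N.
Proof. by rewrite -{1}[a]add0n big_addn. Qed.

Definition Fm (m i j : nat) : {poly rat} :=
  if (j <= m)%N then (i + j == m)%:R
  else - \sum_(q < j - m) g (i + (j - m) - q) * Bnat q.

Lemma sum_entry (m i j : nat) :
  \sum_(0 <= l < i.+1) g (i - l) * (if (m <= l + j)%N then Bnat (l + j - m) else 0)
  = Fm m i j.
Proof.
rewrite /Fm; case: leqP => hj.
-
  case: (leqP (m - j) i) => hi.
  + rewrite (big_cat_nat _ (n := (m - j)%N)) //=; last by lia.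
    rewrite big_nat_cond big1 ?add0r; last first.
      move=> l /andP [/andP [_ hl] _].
      by rewrite ifF ?mulr0 //; lia.
    rewrite big_shift.
    have -> : (i.+1 - (m - j) = (i - (m - j)).+1)%N by lia.
    have -> : ((i + j == m) = (i - (m - j) == 0))%N.
      by apply/idP/idP => /eqP h; apply/eqP; lia.
    rewrite -[X in _ = X](conv' (i - (m - j))).
    apply: eq_big_nat => l hl.
    rewrite ifT; last by lia.
    congr (g _ * Bnat _); lia.
  + rewrite big_nat_cond big1; last first.
      move=> l /andP [/andP [_ hl] _].
      by rewrite ifF ?mulr0 //; lia.
    have -> : ((i + j == m) = false)%N by apply/eqP; lia.
    by [].
-
  have := conv' (i + (j - m)).
  have -> : (i + (j - m) == 0)%N = false by apply/eqP; lia.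
  rewrite (big_cat_nat _ (n := (j - m)%N)) //=; last by lia.
  rewrite (big_shift _ (j - m)%N) big_mkord.
  move/eqP; rewrite addrC addr_eq0 => /eqP <-.
  have -> : ((i + (j - m)).+1 - (j - m) = i.+1)%N by lia.
  apply: eq_big_nat => l hl.
  rewrite ifT; last by lia.
  congr (g _ * Bnat _); lia.
Qed.

Definition Jm k : 'M[{poly rat}]_k := \matrix_(i, j) (((i : nat) + j).+1 == k)%:R.

Lemma detJ k : \det (Jm k) = (-1) ^+ 'C(k, 2).
Proof.
elim: k => [|k IH]; first by rewrite det_mx00.
rewrite (expand_det_row _ ord0) (bigD1 ord_max) //= big1 ?addr0; last first.
  move=> j hj; rewrite mxE /= add0n eqSS.
  have -> : (j == k :> nat) = false.
    by apply/negbTE; apply: contra hj => /eqP h; apply/eqP; apply: val_inj.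
  by rewrite mul0r.
rewrite mxE /= add0n eqxx mul1r /cofactor add0n /=.
have -> : row' ord0 (col' ord_max (Jm k.+1)) = Jm k.
  apply/matrixP => i j; rewrite !mxE lift0 lift_max /=.
  by rewrite addSn.
by rewrite IH -exprD binS bin1 addnC.
Qed.

Definition Tm n : 'M[{poly rat}]_n := \matrix_(i, j) (if (j <= i)%N then g (i - j) else 0).
Definition Hm n m : 'M[{poly rat}]_n :=
  \matrix_(i, j) B ((i : nat)%:Z + (j : nat)%:Z + - (m%:Z)).

Lemma detT n : \det (Tm n) = 1.
Proof.
rewrite det_trig; last first.
  by apply/is_trig_mxP => i j hij; rewrite mxE ifF // leqNgt hij.
by apply: big1 => i _; rewrite mxE leqnn subnn.
Qed.

Lemma Ment n m (i j : 'I_n) : (Tm n *m Hm n m) i j = Fm m i j.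
Proof.
rewrite mxE -sum_entry.
transitivity (\sum_(0 <= l < n) (if (l <= i)%N then g (i - l) else 0) *
   (if (m <= l + j)%N then Bnat (l + j - m) else 0)).
  by rewrite big_mkord; apply: eq_bigr => l _; rewrite !mxE Bint.
rewrite (big_cat_nat _ (n := i.+1)) //=.
rewrite [X in _ + X = _]big1_seq ?addr0; last first.
  by move=> l /andP [_]; rewrite mem_index_iota => hl; rewrite ifF ?mul0r //; lia.
by apply: eq_big_nat => l hl; rewrite ifT //; lia.
Qed.

Definition Gm m N : 'M[{poly rat}]_N := \matrix_(i, j) Nara ((i : nat) + j + m.+1).
Definition Um N : 'M[{poly rat}]_N := \matrix_(r, j) (if (r <= j)%N then Bnat (j - r) else 0).

Lemma detU N : \det (Um N) = 1.
Proof.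
rewrite -det_tr det_trig; last first.
  by apply/is_trig_mxP => i j hij; rewrite !mxE ifF // leqNgt hij.
by apply: big1 => i _; rewrite !mxE leqnn subnn Bnat0.
Qed.

Lemma main_block m N :
  \det (Hm (m.+1 + N) m) = (-1) ^+ 'C(m.+1, 2) * (2%:P * 'X) ^+ N * pN m.+1 N.
Proof.
have eM : Tm (m.+1 + N) *m Hm (m.+1 + N) m = \matrix_(i, j) Fm m i j.
  by apply/matrixP => i j; rewrite Ment mxE.
rewrite -[LHS]mul1r -{1}(detT (m.+1 + N)) -det_mulmx eM -[X in \det X]submxK.
have -> : dlsubmx (\matrix_(i, j) Fm m i j : 'M_(m.+1 + N)) = 0.
  apply/matrixP => i j; rewrite !mxE /Fm /= ifT; last by have := ltn_ord j; lia.
  by have -> : (m.+1 + i + j == m)%N = false by apply/eqP; lia.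
rewrite det_ublock.
have -> : ulsubmx (\matrix_(i, j) Fm m i j : 'M_(m.+1 + N)) = Jm m.+1.
  apply/matrixP => i j; rewrite !mxE /Fm /= ifT; last by have := ltn_ord j; lia.
  by rewrite eqSS.
have -> : drsubmx (\matrix_(i, j) Fm m i j : 'M_(m.+1 + N))
   = ((2%:P * 'X) *: Gm m N) *m Um N.
  apply/matrixP => i j; rewrite !mxE /Fm /= ifF; last by lia.
  have -> : (m.+1 + j - m = j.+1)%N by lia.
  symmetry.
  transitivity (\sum_(0 <= r < N) (2%:P * 'X * Nara (i + r + m.+1)) *
      (if (r <= j)%N then Bnat (j - r) else 0)).
    by rewrite big_mkord; apply: eq_bigr => r _; rewrite !mxE.
  rewrite (big_cat_nat _ (n := j.+1)) //=.
  rewrite [X in _ + X = _]big1_seq ?addr0; last first.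
    by move=> l /andP [_]; rewrite mem_index_iota => hl; rewrite ifF ?mulr0 //; lia.
  rewrite big_nat_rev /= big_mkord -sumrN; apply: eq_bigr => q _.
  have hq := ltn_ord q.
  have -> : (m.+1 + i + j.+1 - q = (i + (j - q) + m).+2)%N by lia.
  rewrite gSS ifT; last by lia.
  have -> : (j - (0 + j.+1 - q.+1) = q)%N by lia.
  have -> : (i + (0 + j.+1 - q.+1) + m.+1 = (i + (j - q) + m).+1)%N by lia.
  ring.
by rewrite detJ det_mulmx detZ detU mulr1 mulrA.
Qed.


Theorem theorem9 (m : nat) : (1 <= m)%N ->
  (forall n : nat, (1 <= n <= m)%N -> DB (- (m%:Z)) n = 0) /\
  (forall n : nat, (m.+1 <= n)%N ->
     DB (- (m%:Z)) n =
       (-1) ^+ 'C(m.+1, 2) * (2%:P * 'X) ^+ (n - m.+1) * pN m.+1 (n - m.+1)).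
Proof.
move=> hm; split.
- move=> n /andP [hn1 hnm]; case: n hn1 hnm => [//|n] _ hnm.
  rewrite /DB (expand_det_row _ ord0) big1 // => j _; rewrite mxE Bint ifF ?mul0r //.
  apply/negbTE; rewrite -ltnNge /= add0n; have := ltn_ord j; lia.
- move=> n hn; move: (n - m.+1)%N (subnKC hn) => N <-.
  exact: main_block.
Qed.
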